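(* Let $R=\mathbb{K}[x_{i,i+1},x_{i,i+2}: i\in\mathbb{N}]$, $\varphi:R\to\mathbb{K}[x_i:i\in\mathbb{N}]$ with $\varphi(x_{i,i+1})=x_ix_{i+1}$, $\varphi(x_{i,i+2})=x_ix_{i+2}$, and $I=\ker\varphi$. Let $g=\prod x_{i,j}^{u_{i,j}}-\prod x_{i,j}^{v_{i,j}}\in I$ be a binomial that is not a multiple of any variable, and let $c$ be the smallest vertex adjacent to $g$. Then $w_g([c,c+1])=-w_g([c,c+2])\ne0$.
   Context: $\mathbb{K}$ is a field. $E=\{[i,i+1],[i,i+2]:i\in\mathbb{N}\}$, $w_g([i,j])=u_{i,j}-v_{i,j}$ for $[i,j]\in E$; a vertex $n\in\mathbb{N}$ is adjacent to $g$ if $n\in\{i,j\}$ for some $[i,j]\in E$ with $w_g([i,j])\ne0$ (the statement presupposes such a vertex exists). *)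

(* Defs.v *)
From HB Require Import structures.
From mathcomp Require Import all_boot all_order all_algebra.
From mathcomp Require Import finmap.
From mathcomp.multinomials Require Import monalg.
Set Implicit Arguments. Unset Strict Implicit. Unset Printing Implicit Defensive.
Import Order.TTheory GRing.Theory Num.Theory.
Local Open Scope ring_scope.

(* Edge set E = {[i,i+1],[i,i+2] : i in N}: the edge (i,false) is [i,i+1],
   the edge (i,true) is [i,i+2]. *)
Definition edge : choiceType := (nat * bool)%type.
Definition esrc (e : edge) : nat := e.1.
Definition etgt (e : edge) : nat := (e.1 + (if e.2 then 2 else 1))%N.

Definition Rring (K : fieldType) := {malg K[{cmonom edge}]}.
Definition Sring (K : fieldType) := {malg K[{cmonom nat}]}.

Definition xS (K : fieldType) (i : nat) : Sring K := << ucm i >>.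
Definition xR (K : fieldType) (e : edge) : Rring K := << ucm e >>.
Definition monR (K : fieldType) (m : {cmonom edge}) : Rring K := << m >>.

Definition phi_mon (K : fieldType) (m : {cmonom edge}) : Sring K :=
  \prod_(e <- finsupp m) (xS K (esrc e) * xS K (etgt e)) ^+ (m e).
Definition phi (K : fieldType) (g : Rring K) : Sring K :=
  mmap (fun c : K => c%:MP) (phi_mon K) g.
Definition inI (K : fieldType) (g : Rring K) : Prop := phi g = 0.

Definition wg (u v : {cmonom edge}) (e : edge) : int := (u e)%:Z - (v e)%:Z.

Definition adjacent (u v : {cmonom edge}) (n : nat) : Prop :=
  exists e : edge, ((esrc e == n) || (etgt e == n)) /\ wg u v e != 0.

(* Main.v *)
Require Import Defs.
From HB Require Import structures.
From mathcomp Require Import all_boot all_order all_algebra.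
From mathcomp Require Import finmap.
From mathcomp.multinomials Require Import monalg.
From mathcomp Require Import zify.
Import GRing.Theory Num.Theory.
Local Open Scope ring_scope.
Open Scope fset_scope.

Definition powm (k : {cmonom nat}) (n : nat) : {cmonom nat} := iter n (mmul k) mone.
Fixpoint Ms (s : seq edge) (n : edge -> nat) : {cmonom nat} :=
  match s with [::] => mone | e :: s => mmul (powm (mmul (ucm (esrc e)) (ucm (etgt e))) (n e)) (Ms s n) end.

Lemma UM (K : fieldType) (k1 k2 : {cmonom nat}) : (<<k1>> : Sring K) * <<k2>> = << mmul k1 k2 >>.
Proof. by rewrite malgM_def fgmulUU mulr1. Qed.
Lemma U1 (K : fieldType) : (<<mone>> : Sring K) = 1.
Proof. by rewrite rmorph1. Qed.
Lemma powm0 k : powm k 0 = mone. Proof. reflexivity. Qed.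
Lemma powmS k n : powm k n.+1 = mmul k (powm k n). Proof. reflexivity. Qed.
Lemma powmE (K : fieldType) k n : (<<k>> : Sring K) ^+ n = << powm k n >>.
Proof. elim: n => [|n IH]. rewrite expr0 powm0 rmorph1. reflexivity.
rewrite exprS IH UM powmS. reflexivity. Qed.
Lemma MsE (K : fieldType) s n : \prod_(e <- s) (xS K (esrc e) * xS K (etgt e)) ^+ (n e) = (<< Ms s n >> : Sring K).
Proof. elim: s => [|e s IH]. rewrite big_nil /= rmorph1. reflexivity.
rewrite big_cons IH /xS UM powmE UM. reflexivity. Qed.
Lemma powmC k n i : powm k n i = (n * k i)%N.
Proof. elim: n => [|n IH]; first by rewrite /powm /= cm1. by rewrite /powm /= cmM -/(powm k n) IH mulSn. Qed.
Lemma MsC s n i : Ms s n i = (\sum_(e <- s) n e * ((esrc e == i) + (etgt e == i)))%N.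
Proof. elim: s => [|e s IH]; first by rewrite big_nil cm1. by rewrite big_cons /= cmM IH powmC cmM !cmU. Qed.

Lemma phiU (K : fieldType) m : phi (monR K m) = (<< Ms (finsupp m) m >> : Sring K).
Proof. rewrite /phi /monR mmapU. set a := (X in X * _).
have -> : a = 1. apply/malgP => k; rewrite mcoeff1 /a eq_sym. reflexivity.
apply: (etrans (mul1r _)). by rewrite /phi_mon MsE. Qed.

Lemma phiB0 (K : fieldType) (x y : Rring K) : phi (x - y) = phi x - phi y.
Proof. rewrite /phi mmapB. by congr (mmap _ _ _ - mmap _ _ _). Qed.

Lemma phiB (K : fieldType) u v : phi (monR K u - monR K v) = (<< Ms (finsupp u) u >> : Sring K) - << Ms (finsupp v) v >>.
Proof. rewrite (@phiB0 K (monR K u) (monR K v)). congr (_ - _). exact: (phiU K u). exact: (phiU K v). Qed.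

Lemma Ueq (K : fieldType) (a b : {cmonom nat}) : (<<a>> : Sring K) - <<b>> = 0 -> a = b.
Proof.
move/(congr1 (mcoeff a)). rewrite mcoeffB mcoeff0 [X in X - _]mcoeffU [X in _ - X]mcoeffU eqxx.
case: eqP => // _; rewrite subr0 => /eqP; rewrite oner_eq0.
done.
Qed.


Definition aw (c : nat) (e : edge) : nat := ((esrc e == c) + (etgt e == c))%N.

Lemma sumF (m : {cmonom edge}) (F : {fset edge}) c : finsupp m `<=` F ->
  (\sum_(e <- finsupp m) m e * aw c e = \sum_(e <- F) m e * aw c e)%N.
Proof.
move=> sub; apply: big_fset_incl => // x _ xn.
by move: xn; rewrite -cmE_eq0 => /eqP ->.
Qed.

Lemma wg_neq0 u v e : (wg u v e != 0) = (u e != v e).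
Proof. by rewrite /wg subr_eq0 eqz_nat. Qed.

Lemma keyl (u v : {cmonom edge}) c :
  (forall n : nat, adjacent u v n -> (c <= n)%N) ->
  forall e : edge, e != (c, false) -> e != (c, true) -> (u e * aw c e = v e * aw c e)%N.
Proof.
move=> H4 [i b] n1 n2; rewrite /aw /esrc /etgt /=.
case: (eqVneq i c) => [eic|nic].
  by subst i; case: b n1 n2; rewrite eqxx.
case: (eqVneq (i + (if b then 2 else 1))%N c) => [ht|ht]; last first.
  by rewrite /= !muln0.
case: (eqVneq (u (i, b)) (v (i, b))) => [-> //|neq].
have : (c <= i)%N.
  apply: H4; exists (i, b); split; first by rewrite /esrc eqxx.
  by rewrite wg_neq0.
case: b ht {n1 n2 neq} => /= ht; lia.
Qed.

Close Scope fset_scope.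

Theorem corollary6p2 (K : fieldType) (u v : {cmonom edge}) (c : nat) :
  inI (monR K u - monR K v) ->
  (forall (e : edge) (q : Rring K), monR K u - monR K v <> xR K e * q) ->
  adjacent u v c ->
  (forall n : nat, adjacent u v n -> (c <= n)%N) ->
  wg u v (c, false) = - wg u v (c, true) /\ wg u v (c, false) != 0.
Proof.
move=> H1 _ H3 H4.
have EM : Ms (finsupp u) u = Ms (finsupp v) v.
  by apply: (@Ueq K); rewrite -phiB.
have Ec := congr1 (fun m : {cmonom nat} => m c) EM.
rewrite /= !MsC in Ec.
set F := (finsupp u `|` finsupp v `|` [fset (c, false); (c, true)])%fset.
have Ef : (c, false) \in F by rewrite !inE eqxx !orbT.
have Et : (c, true) \in (F `\ (c, false))%fset by rewrite !inE /= !xpair_eqE /= !eqxx /= !orbT.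
have Hs : forall m : {cmonom edge}, (finsupp m `<=` F)%fset ->
  (\sum_(e <- finsupp m) m e * ((esrc e == c) + (etgt e == c)) =
   m (c, false) + m (c, true) + \sum_(e <- (F `\ (c, false) `\ (c, true))%fset) m e * aw c e)%N.
  move=> m sub; rewrite (sumF m F c sub) (big_fsetD1 _ Ef) (big_fsetD1 _ Et) /aw /esrc /etgt /=.
  rewrite eqxx.
  have -> : ((c + 1)%N == c) = false by lia.
  have -> : ((c + 2)%N == c) = false by lia.
  by rewrite !muln1 addnA.
rewrite Hs ?Hs in Ec; last first.
- by apply/fsubsetP => x xi; rewrite !inE xi ?orbT.
- by apply/fsubsetP => x xi; rewrite !inE xi ?orbT.
have Er : (\sum_(e <- (F `\ (c, false) `\ (c, true))%fset) u e * aw c e =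
          \sum_(e <- (F `\ (c, false) `\ (c, true))%fset) v e * aw c e)%N.
  apply: eq_big_seq => e; rewrite !inE => /andP[n2 /andP[n1 _]].
  exact: keyl.
rewrite Er in Ec.
have Eq : wg u v (c, false) = - wg u v (c, true) by rewrite /wg; lia.
split => //.
case: H3 => [[i b] [He Hw]].
move: He; rewrite /esrc /etgt /= => /orP[/eqP ic|/eqP ht].
  subst i; case: b Hw => // Hw.
  by rewrite Eq oppr_eq0.
have : (c <= i)%N by apply: H4; exists (i, b); rewrite /esrc eqxx.
case: b ht {Hw} => /= ht; lia.
Qed.
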